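(* Let $d$ be an odd integer. Then $U=\{(0,0)\}\cup\{(e,f)\in\mathcal{B}\mid f=d\}$ is maximal avoidable.
   Context: The bicyclic inverse semigroup is $\mathcal{B}=\{(a,b)\in\mathbb{Z}\times\mathbb{Z}\mid a\ge 0,\ a+b\ge 0\}$ with multiplication $(a,b)(c,d)=(\max\{c+d,a\}-d,\ b+d)$. A subset $U\subseteq\mathcal{B}$ is called avoidable if $\mathcal{B}$ can be partitioned into two subsets $A$ and $B$ such that no element of $U$ can be written as a product $xy$ of two distinct elements $x\neq y$ both in $A$, or both in $B$. A maximal avoidable set is an avoidable set not properly contained in any other avoidable subset of $\mathcal{B}$. *)

(* Defs.v *)
From Stdlib Require Import ZArith.
Open Scope Z_scope.

(* The bicyclic inverse semigroup B = {(a,b) in Z x Z | a >= 0, a + b >= 0}. *)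
Definition inB (p : Z * Z) : Prop := 0 <= fst p /\ 0 <= fst p + snd p.

Definition bmul (p q : Z * Z) : Z * Z :=
  (Z.max (fst q + snd q) (fst p) - snd q, snd p + snd q).

Definition subsetB (U : Z * Z -> Prop) : Prop := forall p, U p -> inB p.

Definition avoidable (U : Z * Z -> Prop) : Prop :=
  subsetB U /\
  exists A : Z * Z -> Prop,
    forall x y, inB x -> inB y -> x <> y -> (A x <-> A y) -> ~ U (bmul x y).

Definition maximal_avoidable (U : Z * Z -> Prop) : Prop :=
  avoidable U /\
  forall V : Z * Z -> Prop, subsetB V -> (forall p, U p -> V p) ->
    avoidable V -> forall p, V p -> U p.

(* Main.v *)
Require Import Defs.
From Stdlib Require Import ZArith Lia Classical.
Open Scope Z_scope.

Definition Pb (d f : Z) : bool :=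
  let m := Z.abs d in
  if (f mod m =? 0) then 0 <? f * d else 2 * (f mod m) <? m.

Lemma mod_opp (m x : Z) : 0 < m ->
  (-x) mod m = if x mod m =? 0 then 0 else m - x mod m.
Proof.
  intros Hm. destruct (Z.eqb_spec (x mod m) 0) as [H|H].
  - apply Z.mod_opp_l_z; lia.
  - apply Z.mod_opp_l_nz; lia.
Qed.

Lemma oddE (d : Z) : Z.odd d = true -> exists k, d = 2*k+1.
Proof. intros H. apply Z.odd_spec in H. destruct H as [k Hk]. exists k; lia. Qed.

Lemma Pb_opp (d h : Z) : Z.odd d = true -> h <> 0 -> Pb d h <> Pb d (-h).
Proof.
  intros Hd Hh. destruct (oddE d Hd) as [k Hk].
  assert (Hm : 0 < Z.abs d) by lia.
  assert (Hmo : exists j, Z.abs d = 2*j+1) by (destruct (Z.abs_spec d) as [[? ->]|[? ->]]; [exists k|exists (-k-1)]; lia).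
  destruct Hmo as [j Hj].
  unfold Pb; cbv zeta. rewrite (mod_opp _ h Hm).
  pose proof (Z.mod_pos_bound h (Z.abs d) Hm) as Hb.
  destruct (Z.eqb_spec (h mod Z.abs d) 0) as [H|H]; cbv beta iota zeta.
  - assert (h * d <> 0) by (apply Z.neq_mul_0; lia).
    rewrite Z.mul_opp_l.
    destruct (Z.ltb_spec 0 (h*d)); destruct (Z.ltb_spec 0 (-(h*d))); first [discriminate | lia].
  - destruct (Z.eqb_spec (Z.abs d - h mod Z.abs d) 0); [lia|].
    destruct (Z.ltb_spec (2 * (h mod Z.abs d)) (Z.abs d));
    destruct (Z.ltb_spec (2 * (Z.abs d - h mod Z.abs d)) (Z.abs d)); first [discriminate | lia].
Qed.

Lemma Pb_dsub (d h : Z) : Z.odd d = true -> Pb d h <> Pb d (d - h).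
Proof.
  intros Hd. destruct (oddE d Hd) as [k Hk].
  assert (Hm : 0 < Z.abs d) by lia.
  assert (Hmo : exists j, Z.abs d = 2*j+1) by (destruct (Z.abs_spec d) as [[? ->]|[? ->]]; [exists k|exists (-k-1)]; lia).
  destruct Hmo as [j Hj].
  assert (Hdm : (d - h) mod Z.abs d = (- h) mod Z.abs d).
  { destruct (Z.abs_spec d) as [[? E]|[? E]]; rewrite E.
    - replace (d - h) with (-h + 1 * d) by ring. rewrite Z.mod_add; lia.
    - replace (d - h) with (-h + (-1) * (-d)) by ring. rewrite Z.mod_add; lia. }
  unfold Pb; cbv zeta. rewrite Hdm, (mod_opp _ h Hm).
  pose proof (Z.mod_pos_bound h (Z.abs d) Hm) as Hb.
  destruct (Z.eqb_spec (h mod Z.abs d) 0) as [H|H]; cbv beta iota zeta.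
  - apply Z.mod_divide in H; [|lia]. apply (proj1 (Z.divide_abs_l d h)) in H.
    destruct H as [q Hq]. subst h. rewrite ?Z.eqb_refl; cbv beta iota.
    assert (0 < d * d) by nia.
    replace (q*d*d) with (q*(d*d)) by ring.
    replace ((d - q*d)*d) with ((1-q)*(d*d)) by ring.
    set (D := d*d) in *.
    destruct (Z.le_gt_cases q 0).
    + assert (q * D <= 0) by nia. assert (0 < (1-q)*D) by nia.
      destruct (Z.ltb_spec 0 (q*D)); destruct (Z.ltb_spec 0 ((1-q)*D)); first [discriminate | lia].
    + assert (0 < q * D) by nia. assert ((1-q)*D <= 0) by nia.
      destruct (Z.ltb_spec 0 (q*D)); destruct (Z.ltb_spec 0 ((1-q)*D)); first [discriminate | lia].
  - destruct (Z.eqb_spec (Z.abs d - h mod Z.abs d) 0); [lia|].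
    destruct (Z.ltb_spec (2 * (h mod Z.abs d)) (Z.abs d));
    destruct (Z.ltb_spec (2 * (Z.abs d - h mod Z.abs d)) (Z.abs d)); first [discriminate | lia].
Qed.

Lemma bool_iff (a b : bool) : (a = true <-> b = true) -> a = b.
Proof. destruct a, b; intuition; symmetry; auto. Qed.

Lemma avoidU (d : Z) (hd : Z.odd d = true) :
  avoidable (fun p => p = (0, 0) \/ (inB p /\ snd p = d)).
Proof.
  split.
  - intros p [->|[H _]]; [unfold inB; simpl; lia|exact H].
  - exists (fun x => Pb d (snd x) = true).
    intros [a b] [c g] Hx Hy Hne Hiff HU. unfold inB in *; simpl in *.
    apply bool_iff in Hiff.
    unfold bmul in HU; simpl in HU. destruct HU as [HU|[_ HU]].
    + injection HU as H1 H2.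
      assert (b <> 0).
      { intro. subst b. apply Hne. f_equal; lia. }
      apply (Pb_opp d b hd H). replace (-b) with g by lia. exact Hiff.
    + apply (Pb_dsub d b hd). replace (d - b) with g by lia. exact Hiff.
Qed.

Lemma not_iff3 (P Q R : Prop) : ~ (P <-> R) -> ~ (Q <-> R) -> (P <-> Q).
Proof. destruct (classic P), (classic Q); tauto. Qed.

Theorem proposition6p3 (d : Z) (hd : Z.odd d = true) :
  maximal_avoidable (fun p => p = (0, 0) \/ (inB p /\ snd p = d)).
Proof.
  split; [exact (avoidU d hd)|].
  intros V HVB HUV [_ [A HA]] [e f] Vp.
  destruct (oddE d hd) as [k Hk].
  destruct (classic ((e, f) = (0, 0) \/ inB (e, f) /\ snd (e, f) = d)) as [H|Hn]; [exact H|exfalso].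
  assert (Hp : inB (e, f)) by (apply HVB; exact Vp).
  assert (Hpne : (e, f) <> (0, 0)) by tauto.
  assert (Hfd : f <> d) by (simpl in Hn; tauto).
  unfold inB in Hp; simpl in Hp.
  assert (E : forall x y, inB x -> inB y -> x <> y -> V (bmul x y) -> ~ (A x <-> A y)).
  { intros x y Hx Hy Hxy HV Hi. exact (HA x y Hx Hy Hxy Hi HV). }
  assert (M : forall u v, inB u -> inB v -> snd u = snd v -> (A u <-> A v)).
  { intros [a b] [c g] Hu Hv Hs. simpl in Hs. subst g.
    set (w := (Z.max 0 (b - d), d - b)).
    assert (Hw : inB w) by (unfold inB, w; simpl; lia).
    unfold inB in Hu, Hv; simpl in Hu, Hv.
    apply (not_iff3 _ _ (A w)); apply E;
      first [assumption | (unfold inB; simpl; lia) | (unfold w; intro Heq; injection Heq; lia)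
            | (apply HUV; right; unfold bmul, inB, w; simpl; split; [split|]; lia) ].
  }
  set (col := fun h => A (Z.max 0 (-h), h)).
  assert (RE : forall x y, inB x -> inB y -> x <> y -> V (bmul x y) -> ~ (col (snd x) <-> col (snd y))).
  { intros x y Hx Hy Hxy HV Hi. apply (E x y Hx Hy Hxy HV).
    assert (Hcx : A x <-> col (snd x)) by (apply M; auto; unfold inB; simpl; lia).
    assert (Hcy : A y <-> col (snd y)) by (apply M; auto; unfold inB; simpl; lia).
    tauto. }
  assert (R2 : forall h, ~ (col h <-> col (d - h))).
  { intro h. apply (RE (Z.max 0 (-h), h) (Z.max 0 (h - d), d - h)).
    - unfold inB; simpl; lia.
    - unfold inB; simpl; lia.
    - intro Heq; injection Heq; lia.
    - apply HUV; right; unfold bmul, inB; simpl; split; [split|]; lia. }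
  assert (R1 : ~ (col 0 <-> col f)).
  { apply (RE (0, 0) (e, f)); try (unfold inB; simpl; lia).
    - intro Heq; apply Hpne; symmetry; exact Heq.
    - replace (bmul (0, 0) (e, f)) with (e, f); [exact Vp|].
      unfold bmul; simpl; f_equal; lia. }
  set (t := d - f).
  assert (R3 : ~ (col t <-> col (- t))).
  { destruct (Z.lt_total t 0) as [Ht|[Ht|Ht]]; [| unfold t in Ht; lia |].
    - apply (RE (-t, t) (0, -t)).
      + unfold inB; simpl; lia.
      + unfold inB; simpl; lia.
      + intro Heq; injection Heq; lia.
      + apply HUV; left; unfold bmul; simpl; f_equal; lia.
    - intro Hi. apply (RE (t, -t) (0, t)).
      + unfold inB; simpl; lia.
      + unfold inB; simpl; lia.
      + intro Heq; injection Heq; lia.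
      + apply HUV; left; unfold bmul; simpl; f_equal; lia.
      + simpl. tauto. }
  destruct (Z.eq_dec f (2 * d)) as [Hf2|Hf2].
  -
    assert (Hex : exists x y, inB x /\ inB y /\ x <> y /\ snd x = d /\ snd y = d /\ bmul x y = (e, f)).
    { destruct (Z.lt_total d 0) as [Hd|[Hd|Hd]]; [| lia |].
      - destruct (Z.eq_dec e (-2*d)).
        + exists (-d, d), (-2*d, d). unfold inB, bmul; cbn [fst snd].
          repeat split; first [lia | (intro Heq; apply (f_equal fst) in Heq; cbn [fst] in Heq; lia) | (f_equal; lia)].
        + exists (e + d, d), (-d, d). unfold inB, bmul; cbn [fst snd].
          repeat split; first [lia | (intro Heq; apply (f_equal fst) in Heq; cbn [fst] in Heq; lia) | (f_equal; lia)].
      - destruct (Z.eq_dec e 0).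
        + exists (1, d), (0, d). unfold inB, bmul; cbn [fst snd].
          repeat split; first [lia | (intro Heq; apply (f_equal fst) in Heq; cbn [fst] in Heq; lia) | (f_equal; lia)].
        + exists (0, d), (e, d). unfold inB, bmul; cbn [fst snd].
          repeat split; first [lia | (intro Heq; apply (f_equal fst) in Heq; cbn [fst] in Heq; lia) | (f_equal; lia)]. }
    destruct Hex as [x [y [Hx [Hy [Hxy [Hsx [Hsy Hb]]]]]]].
    apply (E x y Hx Hy Hxy); [rewrite Hb; exact Vp|].
    apply M; auto; congruence.
  - assert (R4 : ~ (col (f - d) <-> col d)).
    { destruct (Z.le_gt_cases 0 (e + d)).
      - apply (RE (Z.max 0 (d - f), f - d) (e, d)).
        + unfold inB; simpl; lia.
        + unfold inB; simpl; lia.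
        + intro Heq; injection Heq; lia.
        + replace (bmul _ _) with (e, f); [exact Vp|].
          unfold bmul; simpl; f_equal; lia.
      - intro Hi. apply (RE (e + f - d, d) (Z.max 0 (d - f), f - d)).
        + unfold inB; simpl; lia.
        + unfold inB; simpl; lia.
        + intro Heq; injection Heq; lia.
        + replace (bmul _ _) with (e, f); [exact Vp|].
          unfold bmul; simpl; f_equal; lia.
        + simpl; tauto. }
    assert (R2f := R2 f). assert (R20 := R2 0).
    replace (d - 0) with d in R20 by ring.
    replace (- t) with (f - d) in R3 by (unfold t; ring).
    fold t in R2f.
    destruct (classic (col 0)), (classic (col f)), (classic (col t)),
      (classic (col (f - d))), (classic (col d)); tauto.
Qed.
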